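(* Let $R$ be a commutative ring with unity in which every zero divisor is harmless. If $r\in R$ is a non-zero F-irreducible element, then $r$ is B-irreducible.
   Context: A zero divisor $r$ of $R$ is called harmless if there exists a unit $u\in R$ with $r=1-u$. A non-zero, non-unit element $r\in R$ is called B-irreducible if the principal ideal $(r)$ is a maximal element, with respect to inclusion, of the set of all proper principal ideals of $R$. A factorization of $r$ is an expression $r=a_1\cdots a_n$ with $a_i\in R$; a refinement of this factorization is a factorization obtained by replacing one or more of the factors $a_i$ by a factorization of $a_i$. A non-unit element $r\in R$ is called F-irreducible if every factorization of $r$ has a refinement in which $r$ appears as one of the new factors. *)

(* Defs.v *)
From HB Require Import structures.
From mathcomp Require Import all_boot all_order all_algebra.
Set Implicit Arguments. Unset Strict Implicit. Unset Printing Implicit Defensive.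
Import GRing.Theory.
Local Open Scope ring_scope.

Section Defs.
Variable R : comUnitRingType.

Definition zero_divisor (r : R) : Prop := exists s : R, s != 0 /\ r * s = 0.

Definition harmless (r : R) : Prop := exists u : R, u \is a GRing.unit /\ r = 1 - u.

Definition pideal (r : R) : R -> Prop := fun x => exists c : R, x = c * r.

Definition proper_ideal (I : R -> Prop) : Prop := exists x : R, ~ I x.

Definition ideal_sub (I J : R -> Prop) : Prop := forall x, I x -> J x.

Definition B_irreducible (r : R) : Prop :=
  r != 0 /\ r \isn't a GRing.unit /\
  proper_ideal (pideal r) /\
  forall s : R, proper_ideal (pideal s) -> ideal_sub (pideal r) (pideal s) ->
    ideal_sub (pideal s) (pideal r).

Definition factorization (r : R) (a : seq R) : Prop := \prod_(x <- a) x = r.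

(* a refinement of the factorization a: each factor a_i is replaced by a
   factorization fs_i of a_i (possibly the trivial one [:: a_i]); the refined
   factorization is flatten fs. *)
Definition refinement_family (a : seq R) (fs : seq (seq R)) : Prop :=
  size fs = size a /\
  forall i, (i < size a)%N -> factorization (nth 0 a i) (nth [::] fs i).

Definition F_irreducible (r : R) : Prop :=
  r \isn't a GRing.unit /\
  forall a : seq R, factorization r a ->
    exists fs : seq (seq R), refinement_family a fs /\
      exists i, (i < size a)%N /\ r \in nth [::] fs i.

End Defs.

(* Main.v *)
Require Import Defs.
From mathcomp Require Import all_boot all_order all_algebra.
Import GRing.Theory.
Local Open Scope ring_scope.

Lemma prod_mem {R : comUnitRingType} (l : seq R) (r : R) :
  r \in l -> exists d, \prod_(x <- l) x = r * d.
Proof.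
move=> Hr; exists (\prod_(x <- rem r l) x).
by rewrite (perm_big _ (perm_to_rem Hr)) big_cons.
Qed.

Lemma unit_of_mul {R : comUnitRingType} (c s : R) :
  c * s = 1 -> s \is a GRing.unit.
Proof.
move=> H; have : c * s \is a GRing.unit by rewrite H unitr1.
by rewrite unitrM => /andP[].
Qed.

Theorem mainTheorem4 (R : comUnitRingType)
  (Hzd : forall z : R, zero_divisor z -> harmless z)
  (r : R) (Hr0 : r != 0) (HF : F_irreducible r) :
  B_irreducible r.
Proof.
case: HF => Hnu HF.
split; first exact: Hr0.
split; first exact: Hnu.
split.
  exists 1 => -[c Hc].
  by move: Hnu; rewrite (@unit_of_mul _ c r (esym Hc)).
move=> s [x Hx] Hsub.
have [c Hc] : pideal s r by apply: Hsub; exists 1; rewrite mul1r.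
have Hfac : factorization r [:: c; s].
  by rewrite /factorization big_cons big_cons big_nil mulr1.
have [fs [[Hsz Hfam] [i [Hi Hin]]]] := HF _ Hfac.
have Hfi := Hfam i Hi.
have [d Hd] := @prod_mem _ _ r Hin.
move: Hfi; rewrite /factorization Hd => Hfi.
move: Hi; case: i Hin Hd Hfi => [|[|i]] //= _ _ Hfi _.
- (* c = r * d *)
  exfalso.
  have Hz : zero_divisor (1 - d * s).
    exists r; split => //.
    by rewrite mulrBl mul1r (mulrC d) -mulrA (mulrC d) Hfi (mulrC s) -Hc subrr.
  have [u [Hu Hue]] := Hzd _ Hz.
  have Hds : d * s = u.
    by apply: oppr_inj; apply: (@addrI _ 1).
  apply: Hx; exists (x * u^-1 * d).
  by rewrite -!mulrA Hds mulVr // mulr1.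
- move=> y [e ->]; exists (e * d).
  by rewrite -Hfi mulrA mulrAC.
Qed.
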